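(* Let $N=(S,T,F,M_0,\ell)$ be a Petri net and $N'=(S',T',F',M'_0,\ell')$ a plain Petri net with $S'\subseteq S$ and $M'_0=M_0\restriction S'$. Suppose: (1) for every $t\in T$ with $\ell(t)\ne\tau$ there are $t'\in T'$ with $\ell'(t')=\ell(t)$ and a finite $G\in\mathbb N^T$ with $\ell(G)\equiv\emptyset$ such that $[\![t']\!]=[\![t+G]\!]$; (2) for any finite $G\in\mathbb Z^T$ with $\ell(G)\equiv\emptyset$, $M'\in\mathbb N^{S'}$, $U'\in\mathbb N^{T'}$ and $U\in\mathbb N^T$ with $\ell'(U')=\ell(U)$, $M'+{}^\bullet U'\in[M'_0\rangle_{N'}$ and $M:=M'+{}^\bullet U'+(M_0-M'_0)+[\![G]\!]-{}^\bullet U\in\mathbb N^S$ with $M+{}^\bullet U\in[M_0\rangle_N$, it holds that: (a) there is no infinite sequence $M\xrightarrow{\tau}M_1\xrightarrow{\tau}M_2\xrightarrow{\tau}\cdots$; (b) if $M'\xrightarrow{a}$ with $a\in\mathrm{Act}$ then $M\xrightarrow{a}$ or $M\xrightarrow{\tau}$; (c) if $M\xrightarrow{a}$ with $a\in\mathrm{Act}$ then $M'\xrightarrow{a}$. Then $N\approx^\Delta_{bSTb}N'$.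
   Context: Fix visible actions $\mathrm{Act}$ and $\tau\notin\mathrm{Act}$. A Petri net $(S,T,F,M_0,\ell)$ has disjoint $S,T$, $F:(S\times T)\cup(T\times S)\to\mathbb N$, $M_0\in\mathbb N^S$, $\ell:T\to\mathrm{Act}\cup\{\tau\}$. A signed multiset over $X$ is a function $X\to\mathbb Z$ (finite if finitely many nonzero values); operations are pointwise; signed multisets over different sets are identified when they agree on the common domain and are zero elsewhere (e.g. $M'\in\mathbb N^{S'}$ is viewed over $S$). ${}^\bullet x(y)=F(y,x)$, $x^\bullet(y)=F(x,y)$, extended additively to finite signed multisets $G$ of transitions; $[\![G]\!]=G^\bullet-{}^\bullet G$. $\ell(G)=\sum_tG(t)\{\ell(t)\}$, and $\ell(G)\equiv\emptyset$ means $\ell(G)(a)=0$ for every $a\in\mathrm{Act}$. For a finite nonempty multiset $G$, $M[G\rangle M'$ iff ${}^\bullet G\le M$ and $M'=M-{}^\bullet G+G^\bullet$; $[M_0\rangle_N$ is the set of reachable markings. For arbitrary markings, $M\xrightarrow{\alpha}$ means $M[t\rangle$ for some $t$ with label $\alpha$ (in the respective net), and $M\xrightarrow{\tau}M_1$ means $M[t\rangle M_1$ with $\ell(t)=\tau$. Plain: $\ell$ injective and never $\tau$. $N\approx^\Delta_{bSTb}N'$ (branching ST-bisimilarity with explicit divergence): there is a relation $\mathcal B$ between ST-markings $(M,U)\in\mathbb N^S\times T^*$ of $N$ and of $N'$, relating $(M_0,\varepsilon)$ and $(M'_0,\varepsilon)$, such that: if $\mathfrak M_1\mathcal B\mathfrak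 M_2$ and $\mathfrak M_1\xrightarrow{\alpha}\mathfrak M_1'$ then $\mathfrak M_2\Rightarrow\mathfrak M_2^\dagger\xrightarrow{(\alpha)}\mathfrak M_2'$ with $\mathfrak M_1\mathcal B\mathfrak M_2^\dagger$, $\mathfrak M_1'\mathcal B\mathfrak M_2'$ ($\Rightarrow$ reflexive transitive closure of $\xrightarrow{\tau}$; $\xrightarrow{(\alpha)}$ is $\xrightarrow{\alpha}$ or, if $\alpha=\tau$, equality), and symmetrically; and if $\mathfrak M_1\mathcal B\mathfrak M_2$ and an infinite $\tau$-sequence from $\mathfrak M_1$ has all states related to $\mathfrak M_2$, there is an infinite $\tau$-sequence from $\mathfrak M_2$ with all pairs of states related, and symmetrically. ST-transitions: $(M,U)\xrightarrow{a^+}(M-{}^\bullet t,Ut)$ iff $\ell(t)=a\in\mathrm{Act}$, $M[t\rangle$; $(M,U)\xrightarrow{a^{-n}}(M+t^\bullet,U^{-n})$ iff the $n$-th element $t$ of $U$ has label $a$ ($U^{-n}$: it removed); $(M,U)\xrightarrow{\tau}(M',U)$ iff $M[t\rangle M'$ with $\ell(t)=\tau$. *)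

(* Defs.v *)
From mathcomp Require Import all_boot all_algebra.
Set Implicit Arguments. Unset Strict Implicit. Unset Printing Implicit Defensive.
Import GRing.Theory.

(* Visible actions: an eqType [Act]; tau is represented by [None : option Act]. *)

(* A Petri net (S,T,F,M0,l): F is split into F(s,t) = pre s t, F(t,s) = post t s. *)
Record petri_net (Act : Type) (S T : Type) := PetriNet {
  pre  : S -> T -> nat;
  post : T -> S -> nat;
  M0   : S -> nat;
  lab  : T -> option Act }.

Section Nets.
Variables (Act : eqType) (S T : Type) (N : petri_net Act S T).

Definition plain : Prop :=
  injective (lab N) /\ forall t, lab N t <> None.

(* finite multisets over T are represented by sequences (multiplicity = count);
   finite signed multisets by pairs (positive part, negative part). *)
Definition mpre (U : seq T) : S -> nat := fun s => \sum_(t <- U) pre N s t.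
Definition mpost (U : seq T) : S -> nat := fun s => \sum_(t <- U) post N t s.
Definition eff (U : seq T) : S -> int := fun s => (Posz (mpost U s) - Posz (mpre U s))%R.
Definition seff (G : seq T * seq T) : S -> int := fun s => (eff G.1 s - eff G.2 s)%R.

Definition lcount (U : seq T) (x : option Act) : nat :=
  count (fun t => lab N t == x) U.
Definition lab_empty (G : seq T * seq T) : Prop :=
  forall a : Act, lcount G.1 (Some a) = lcount G.2 (Some a).

Definition enabled (M : S -> nat) (t : T) : Prop := forall s, pre N s t <= M s.
Definition fire (M : S -> nat) (t : T) (M' : S -> nat) : Prop :=
  enabled M t /\ forall s, M' s = M s - pre N s t + post N t s.

Inductive reachable : (S -> nat) -> Prop :=
| reach_init : reachable (M0 N)
| reach_step M t M' : reachable M -> fire M t M' -> reachable M'.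

Definition can (M : S -> nat) (x : option Act) : Prop :=
  exists t, lab N t = x /\ enabled M t.

Definition no_tau_divergence (M : S -> nat) : Prop :=
  ~ exists f : nat -> (S -> nat),
      f 0 = M /\ forall n, exists t, lab N t = None /\ fire (f n) t (f n.+1).
End Nets.

Inductive stlab (Act : Type) := Start of Act | Finish of Act & nat | Tau.
Arguments Tau {Act}.

Section ST.
Variables (Act : eqType) (S T : Type) (N : petri_net Act S T).

Definition stmarking := ((S -> nat) * seq T)%type.

(* The n-th element (counting from 1) of U1 ++ t :: U2 is t, n = size U1 + 1. *)
Inductive st_step : stmarking -> stlab Act -> stmarking -> Prop :=
| st_start M U t a : lab N t = Some a -> enabled N M t ->
    st_step (M, U) (Start a) (fun s => M s - pre N s t, rcons U t)
| st_finish M U1 t U2 a : lab N t = Some a ->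
    st_step (M, U1 ++ t :: U2) (Finish a (size U1).+1)
            (fun s => M s + post N t s, U1 ++ U2)
| st_tau M U t M' : lab N t = None -> fire N M t M' ->
    st_step (M, U) Tau (M', U).
End ST.

Section Bisim.
Variables (Act : Type) (A B : Type).
Variables (stepA : A -> stlab Act -> A -> Prop) (stepB : B -> stlab Act -> B -> Prop).

Inductive tau_star (X : Type) (step : X -> stlab Act -> X -> Prop) : X -> X -> Prop :=
| ts_refl x : tau_star step x x
| ts_step x y z : step x Tau y -> tau_star step y z -> tau_star step x z.

Definition bsim_div (R : A -> B -> Prop) : Prop :=
  (forall p q, R p q -> forall (al : stlab Act) p', stepA p al p' ->
     exists q1 q', [/\ tau_star stepB q q1, R p q1, R p' q' &
                     (stepB q1 al q' \/ (al = Tau /\ q' = q1))]) /\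
  (forall p q (f : nat -> A), R p q -> f 0 = p ->
     (forall n, stepA (f n) Tau (f n.+1) /\ R (f n) q) ->
     exists g : nat -> B, [/\ g 0 = q, (forall n, stepB (g n) Tau (g n.+1)) &
                              forall i j, R (f i) (g j)]).
End Bisim.

Definition bbisim_div (Act : Type) (A B : Type)
  (stepA : A -> stlab Act -> A -> Prop) (stepB : B -> stlab Act -> B -> Prop)
  (R : A -> B -> Prop) : Prop :=
  bsim_div stepA stepB R /\ bsim_div stepB stepA (fun q p => R p q).

Definition bSTb_div_equiv (Act : eqType) (S1 T1 S2 T2 : Type)
  (N1 : petri_net Act S1 T1) (N2 : petri_net Act S2 T2) : Prop :=
  exists R : stmarking S1 T1 -> stmarking S2 T2 -> Prop,
    R (M0 N1, [::]) (M0 N2, [::]) /\ bbisim_div (st_step N1) (st_step N2) R.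

(* viewing a function on the subset S' = {s | P s} as a function on S (default d elsewhere) *)
Definition ext (S : Type) (P : pred S) (X : Type) (d : X) (f : {s | P s} -> X) (s : S) : X :=
  (if P s as b return P s = b -> X then fun h => f (exist _ s h) else fun _ => d)
    (erefl (P s)).

(* Main.v *)
Require Import Defs.
From mathcomp Require Import all_boot all_algebra zify.
From Stdlib Require Import Classical ClassicalEpsilon FunctionalExtensionality.
Import GRing.Theory.

Lemma extE (S:Type) (P: pred S) X (d:X) (f : {s|P s} -> X) s (h : P s) : ext d f s = f (exist _ s h).
Proof.
rewrite /ext; move: (erefl (P s)); case: {2 3}(P s) => e; last by rewrite h in e.
by congr f; congr exist; apply: bool_irrelevance.
Qed.
Lemma extN (S:Type) (P: pred S) X (d:X) (f : {s|P s} -> X) s : P s = false -> ext d f s = d.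
Proof.
move=> Ps; rewrite /ext; move: (erefl (P s)); case: {2 3}(P s) => // e; exfalso; by rewrite Ps in e.
Qed.

Arguments extE {S P X d f s}.
Arguments extN {S P X d f s}.

Lemma mpre_cat (Act : eqType) S T (N : petri_net Act S T) U V s :
  mpre N (U ++ V) s = mpre N U s + mpre N V s.
Proof. by rewrite /mpre big_cat. Qed.
Lemma mpost_cat (Act : eqType) S T (N : petri_net Act S T) U V s :
  mpost N (U ++ V) s = mpost N U s + mpost N V s.
Proof. by rewrite /mpost big_cat. Qed.
Lemma mpre_cons (Act : eqType) S T (N : petri_net Act S T) t U s :
  mpre N (t :: U) s = pre N s t + mpre N U s.
Proof. by rewrite /mpre big_cons. Qed.
Lemma mpost_cons (Act : eqType) S T (N : petri_net Act S T) t U s :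
  mpost N (t :: U) s = post N t s + mpost N U s.
Proof. by rewrite /mpost big_cons. Qed.
Lemma mpre_nil (Act : eqType) S T (N : petri_net Act S T) s : mpre N [::] s = 0.
Proof. by rewrite /mpre big_nil. Qed.
Lemma mpost_nil (Act : eqType) S T (N : petri_net Act S T) s : mpost N [::] s = 0.
Proof. by rewrite /mpost big_nil. Qed.
Lemma mpre_rcons (Act : eqType) S T (N : petri_net Act S T) U t s :
  mpre N (rcons U t) s = mpre N U s + pre N s t.
Proof. by rewrite -cats1 mpre_cat mpre_cons mpre_nil addn0. Qed.

Lemma lcount_map (Act : eqType) S T (N : petri_net Act S T) U x :
  lcount N U x = count (pred1 x) (map (lab N) U).
Proof. by rewrite /lcount count_map. Qed.

Lemma split_map (A B X : Type) (f : A -> X) (g : B -> X) U1 t U2 V :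
  map f (U1 ++ t :: U2) = map g V -> exists V1 t' V2, V = V1 ++ t' :: V2 /\ size V1 = size U1.
Proof.
elim: U1 V => [|x U1 IH] [|y V] //= [e1 e2]; first by exists [::], y, V.
have [V1 [t' [V2 [-> Hs]]]] := IH _ e2.
by exists (y::V1), t', V2; split => //=; rewrite Hs.
Qed.

Lemma st_tau_inv (Act : eqType) S T (N : petri_net Act S T) p al p' :
  st_step N p al p' -> al = Tau -> exists t, lab N t = None /\ fire N p.1 t p'.1 /\ p'.2 = p.2.
Proof. case=> //= M U t M' Hl Hf _; by exists t. Qed.

Lemma tau_star_snoc (Act X : Type) (step : X -> stlab Act -> X -> Prop) x y z :
  tau_star step x y -> step y Tau z -> tau_star step x z.
Proof.
elim=> [x0 H|x0 y0 z0 H1 H2 IH H3]; first by apply: ts_step H (ts_refl _ _).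
apply: ts_step H1 _; exact: IH.
Qed.
Arguments split_map {A B X f g U1 t U2 V}.
Arguments st_tau_inv {Act S T N p al p'}.
Arguments tau_star_snoc {Act X step x y z}.

Theorem lemma6p4 (Act : eqType) (S T T' : Type) (P : pred S)
  (N : petri_net Act S T) (N' : petri_net Act {s | P s} T')
  (Hplain : plain N')
  (HM0 : forall s' : {s | P s}, M0 N' s' = M0 N (val s'))
  (H1 : forall t : T, lab N t <> None ->
     exists (t' : T') (G : seq T),
       [/\ lab N' t' = lab N t, lab_empty N (G, [::]) &
           forall s, ext 0%R (eff N' [:: t']) s = eff N (t :: G) s])
  (H2 : forall (G : seq T * seq T) (M' : {s | P s} -> nat) (U' : seq T') (U : seq T)
          (M : S -> nat),
     lab_empty N G ->
     (forall x, lcount N' U' x = lcount N U x) ->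
     reachable N' (fun s => M' s + mpre N' U' s) ->
     (forall s, Posz (M s) = (Posz (ext 0%N M' s) + Posz (ext 0%N (mpre N' U') s)
                            + (Posz (M0 N s) - Posz (ext 0%N (M0 N') s))
                            + seff N G s - Posz (mpre N U s))%R) ->
     reachable N (fun s => M s + mpre N U s) ->
     [/\ no_tau_divergence N M,
         (forall a : Act, can N' M' (Some a) -> can N M (Some a) \/ can N M None) &
         (forall a : Act, can N M (Some a) -> can N' M' (Some a))]) :
  bSTb_div_equiv N N'.
Proof.
pose R := fun (p : stmarking S T) (q : stmarking {s|P s} T') =>
  [/\ map (lab N) p.2 = map (lab N') q.2,
      reachable N' (fun s => q.1 s + mpre N' q.2 s),
      reachable N (fun s => p.1 s + mpre N p.2 s) &
      exists G, lab_empty N G /\ forall s, Posz (p.1 s) =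
        (Posz (ext 0%N q.1 s) + Posz (ext 0%N (mpre N' q.2) s)
         + (Posz (M0 N s) - Posz (ext 0%N (M0 N') s))
         + seff N G s - Posz (mpre N p.2 s))%R].
have HR2 : forall p q, R p q -> [/\ no_tau_divergence N p.1,
         (forall a : Act, can N' q.1 (Some a) -> can N p.1 (Some a) \/ can N p.1 None) &
         (forall a : Act, can N p.1 (Some a) -> can N' q.1 (Some a))].
  move=> [M U] [M' U'] [/= Hm HrN' HrN [G [HG HE]]].
  apply: (H2 G M' U' U M HG _ HrN' HE HrN) => x; by rewrite !lcount_map Hm.
have Rtau : forall M U q t M1, R (M,U) q -> lab N t = None -> fire N M t M1 -> R (M1,U) q.
  move=> M U [M' U'] t M1 [/= Hm HrN' HrN [G [HG HE]]] Hl [Hen Hf]; split => //=.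
  - apply: (reach_step (t:=t) HrN); split => s /=; have := Hen s; have := Hf s; lia.
  - exists (t :: G.1, G.2); split.
    + move=> a; rewrite /lab_empty /lcount /= Hl; exact: HG.
    + move=> s; have := HE s; have := Hen s; have := Hf s.
      rewrite /seff /eff /= mpre_cons mpost_cons. lia.
have Rstart : forall M U M' U' t t' a, R (M,U) (M',U') -> lab N t = Some a ->
    lab N' t' = Some a -> enabled N M t -> enabled N' M' t' ->
    R (fun s => M s - pre N s t, rcons U t) (fun s => M' s - pre N' s t', rcons U' t').
  move=> M U M' U' t t' a [/= Hm HrN' HrN [G [HG HE]]] Hl Hl' Hen Hen'; split => /=.
  - by rewrite !map_rcons Hm Hl Hl'.
  - have -> // : (fun s => M' s - pre N' s t' + mpre N' (rcons U' t') s) = (fun s => M' s + mpre N' U' s).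
    apply: functional_extensionality => s; rewrite mpre_rcons; have := Hen' s; lia.
  - have -> // : (fun s => M s - pre N s t + mpre N (rcons U t) s) = (fun s => M s + mpre N U s).
    apply: functional_extensionality => s; rewrite mpre_rcons; have := Hen s; lia.
  - exists G; split => // s; have := HE s; have := Hen s; rewrite mpre_rcons.
    case Ps: (P s); last by rewrite !(extN Ps); lia.
    rewrite !(extE Ps) /= mpre_rcons; have := Hen' (exist _ s Ps); lia.
have Rfinish : forall M U1 t U2 M' V1 t' V2 a, R (M, U1++t::U2) (M', V1++t'::V2) ->
    size U1 = size V1 -> lab N t = Some a -> lab N' t' = Some a ->
    R (fun s => M s + post N t s, U1++U2) (fun s => M' s + post N' t' s, V1++V2).
  move=> M U1 t U2 M' V1 t' V2 a [/= Hm HrN' HrN [G [HG HE]]] Hs Hl Hl'; split => /=.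
  - move: Hm; rewrite !map_cat => /eqP; rewrite eqseq_cat ?size_map //.
    by case/andP => /eqP -> /eqP [_ ->].
  - apply: (reach_step (t:=t') HrN'); split => s /=; rewrite !mpre_cat mpre_cons; lia.
  - apply: (reach_step (t:=t) HrN); split => s /=; rewrite !mpre_cat mpre_cons; lia.
  - have [t'' [G0 [Hl'' HG0 Heff]]] := H1 t ltac:(by rewrite Hl).
    have et : t'' = t' by apply: Hplain.1; rewrite Hl'' Hl Hl'.
    subst t''.
    exists (G.1, G.2 ++ G0); split.
    + move=> b; rewrite /lcount /= count_cat; have := HG b; have := HG0 b.
      rewrite /lcount /= => -> ->; by rewrite addn0.
    + move=> s; have := HE s; have := Heff s.
      rewrite /seff /eff /= ?mpre_cat ?mpost_cat ?mpre_cons ?mpost_cons.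
      case Ps: (P s); last by rewrite !(extN Ps); lia.
      rewrite !(extE Ps) /= ?mpre_cat ?mpost_cat ?mpre_cons ?mpost_cons ?mpre_nil ?mpost_nil; lia.
exists R; split.
  split => /=; first by [].
  - by rewrite (_ : (fun s => M0 N' s + mpre N' [::] s) = M0 N'); [constructor|
      apply: functional_extensionality => s; rewrite mpre_nil addn0].
  - by rewrite (_ : (fun s => M0 N s + mpre N [::] s) = M0 N); [constructor|
      apply: functional_extensionality => s; rewrite mpre_nil addn0].
  - exists ([::], [::]); split => // s.
    rewrite /seff /eff /= !mpre_nil !mpost_nil.
    case Ps: (P s); last by rewrite !(extN Ps); lia.
    rewrite !(extE Ps) /= mpre_nil; lia.
split; split.
- move=> p q HR al p' Hst.
  destruct Hst as [M U t a Hl Hen|M U1 t U2 a Hl|M U t M1 Hl Hf].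
  + case: q HR => M' U' HR.
    have [_ _ Hc] := HR2 _ _ HR.
    have [t' [Hl' Hen']] := Hc a ltac:(by exists t).
    exists (M', U'), (fun s => M' s - pre N' s t', rcons U' t'); split.
    * exact: ts_refl.
    * exact: HR.
    * exact: Rstart HR Hl Hl' Hen Hen'.
    * by left; constructor.
  + case: q HR => M' V HR.
    have [Hm _ _ _] := HR; move: Hm => /= Hm.
    have [V1 [t' [V2 [EV Hs]]]] := split_map Hm.
    subst V.
    have Hl' : lab N' t' = Some a.
      move: Hm; rewrite !map_cat => /eqP; rewrite eqseq_cat ?size_map //.
      by case/andP => _ /eqP [<- _].
    exists (M', V1 ++ t' :: V2), (fun s => M' s + post N' t' s, V1 ++ V2); split.
    * exact: ts_refl.
    * exact: HR.
    * exact: Rfinish HR (esym Hs) Hl Hl'.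
    * by left; rewrite -Hs; constructor.
  + exists q, q; split.
    * exact: ts_refl.
    * exact: HR.
    * exact: Rtau HR Hl Hf.
    * by right.
- move=> p q f HR Hf0 Hf; exfalso.
  have [Hdiv _ _] := HR2 p q HR.
  apply: Hdiv; exists (fun n => (f n).1); split; first by rewrite Hf0.
  move=> n; have [Hs _] := Hf n.
  have [t [Hl [Hfire _]]] := st_tau_inv Hs erefl.
  by exists t.
- move=> p q HR al p' Hst.
  destruct Hst as [M' U' t' a Hl' Hen'|M' V1 t' V2 a Hl'|M' U' t M1 Hl Hf].
  + case: q HR => M U HR.
    have [[M1 U1] [Hts [HR1 [t [Hl Hen]]]]] :
        exists q1, tau_star (st_step N) (M, U) q1 /\ R q1 (M', U') /\ can N q1.1 (Some a).
      apply: NNPP => Hno.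
      pose Good q1 := tau_star (st_step N) (M, U) q1 /\ R q1 (M', U').
      have step : forall x : {q1 | Good q1}, exists y : {q1 | Good q1},
          st_step N (proj1_sig x) Tau (proj1_sig y).
        case=> [[M1 U1] [Hts HR1]].
        have [_ Hb _] := HR2 _ _ HR1.
        case: (Hb a ltac:(by exists t')) => [Hca | [t [Hlt Hent]]].
          by exfalso; apply: Hno; exists (M1, U1).
        pose M2 := fun s => M1 s - pre N s t + post N t s.
        have Hfi : fire N M1 t M2 by split.
        have Hst : st_step N (M1, U1) Tau (M2, U1) by apply: st_tau Hlt Hfi.
        by exists (exist Good (M2, U1) (conj (tau_star_snoc Hts Hst) (Rtau _ _ _ _ _ HR1 Hlt Hfi))).
      pose h := fun x => proj1_sig (constructive_indefinite_description _ (step x)).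
      have Hh : forall x, st_step N (proj1_sig x) Tau (proj1_sig (h x)).
        move=> x; exact: (proj2_sig (constructive_indefinite_description _ (step x))).
      pose x0 : {q1 | Good q1} := exist Good (M, U) (conj (ts_refl _ _) HR).
      have [Hdiv _ _] := HR2 _ _ HR.
      apply: Hdiv; exists (fun n => (proj1_sig (iter n h x0)).1); split => // n.
      have [t [Hl [Hfire _]]] := st_tau_inv (Hh (iter n h x0)) erefl.
      by exists t.
    exists (M1, U1), (fun s => M1 s - pre N s t, rcons U1 t); split.
    * exact: Hts.
    * exact: HR1.
    * exact: Rstart HR1 Hl Hl' Hen Hen'.
    * by left; constructor.
  + case: q HR => M U HR.
    have [Hm _ _ _] := HR; move: Hm => /= Hm.
    have [U1 [t [U2 [EU Hs]]]] := split_map (esym Hm).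
    subst U.
    have Hl : lab N t = Some a.
      move: Hm; rewrite !map_cat => /eqP; rewrite eqseq_cat ?size_map //.
      by case/andP => _ /eqP [-> _].
    exists (M, U1 ++ t :: U2), (fun s => M s + post N t s, U1 ++ U2); split.
    * exact: ts_refl.
    * exact: HR.
    * exact: Rfinish HR Hs Hl Hl'.
    * by left; rewrite -Hs; constructor.
  + by exfalso; apply: Hplain.2 Hl.
- move=> p q f HR Hf0 Hf; exfalso.
  have [Hs _] := Hf 0.
  have [t [Hl _]] := st_tau_inv Hs erefl.
  exact: Hplain.2 Hl.
Qed.
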